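(* Let $E$ be a closed formula in which all bound variables are pairwise distinct, and let $x$ be a variable bound in $E$. Let $[\Gamma]_{V(x)}$ be a normal item occurring in a derivation of $\vdash E$ in LJB. Then for every item of $\Gamma$ of the form $[\Gamma']_{V(x')}$, the variable $x'$ is in the scope of $x$.
   Context: Formulas: $A ::= P(t_1,\dots,t_n)\mid A\rightarrow A\mid\forall x\,A$, with first-order terms. A formula is a tree with nodes labelled by atomic formulas, $\rightarrow$, or $\forall x$; positions are node addresses ordered by prefix. In $E$ each bound variable $x$ labels a unique position $\forall x$; a variable $y$ is in the scope of $x$ if the position labelled $\forall x$ is a strict prefix of that labelled $\forall y$. $V(x)$ is the set of variables bound in the subformula $\forall x\,A$ of $E$ at position $\forall x$ (equivalently $x$ together with all variables in the scope of $x$). LJB: an LJB-context is a finite multiset of items; an item is a formula or $[\Gamma]_V$ ($V$ a finite set of variables bound by the bracket, $\Gamma$ an LJB-context); $FV([\Gamma]_V)=FV(\Gamma)\setminus V$. Cleaning rules (anywhere in a context): $[I,\Gamma]_V\longrightarrow I,[\Gamma]_V$ if $FV(I)\cap V=\emptyset$; $[\ ]_V\longrightarrow\emptyset$; $I\,I\longrightarrow I$; an item is normal if no cleaning rule applies inside it; $\Gamma{\downarrow}$ is the normal form for a fixed strategy. LJB rules apply only to LJB-sequents with normal context in which, in each formula, bound variables are distinct and distinct from free variables; formulas are not identified modulo $\alpha$. Rules: (L$\rightarrow$) from $\Gamma'\vdash A_1,\dots,\Gamma'\vdash A_n$ infer $\Gamma\vdash P$, where $\Gamma=\Gamma_1,[\Gamma_2,[\dots\Gamma_{i-1},[\Gamma_i,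 A_1\rightarrow\dots\rightarrow A_n\rightarrow P]_{V_{i-1}}\dots]_{V_2}]_{V_1}$ ($i\ge1$), $\Gamma'=([\dots[[\Gamma_1]_{V_1},\Gamma_2]_{V_2},\dots,\Gamma_{i-1}]_{V_{i-1}},\Gamma_i,A_1\rightarrow\dots\rightarrow A_n\rightarrow P){\downarrow}$, $P$ atomic with no free variable in $V_1\cup\dots\cup V_{i-1}$; (R$\forall$) from $[\Gamma]_V{\downarrow}\vdash A$ infer $\Gamma\vdash\forall x\,A$, $V$ the set of all variables bound in $\forall x\,A$; (R$\rightarrow$) from $(\Gamma,A){\downarrow}\vdash B$ infer $\Gamma\vdash A\rightarrow B$. *)

(* Defs.v *)
From Stdlib Require Import List Arith Relations.
Import ListNotations.

Inductive term : Type :=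
| Var (x : nat)
| Fn (f : nat) (ts : list term).

Inductive form : Type :=
| Atom (p : nat) (ts : list term)
| Imp (A B : form)
| All (x : nat) (A : form).

Fixpoint fv_term (t : term) : list nat :=
  match t with
  | Var x => [x]
  | Fn _ ts => (fix go (l : list term) : list nat :=
                  match l with [] => [] | u :: l' => fv_term u ++ go l' end) ts
  end.

Definition fv_terms (ts : list term) : list nat := flat_map fv_term ts.

Fixpoint fv_form (A : form) : list nat :=
  match A with
  | Atom _ ts => fv_terms ts
  | Imp A B => fv_form A ++ fv_form B
  | All x A => filter (fun v => negb (Nat.eqb v x)) (fv_form A)
  end.

Fixpoint bv (A : form) : list nat :=
  match A with
  | Atom _ _ => []
  | Imp A B => bv A ++ bv B
  | All x A => x :: bv A
  end.

Definition closed (E : form) : Prop := fv_form E = [].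

Inductive subf : form -> form -> Prop :=
| sf_refl A : subf A A
| sf_impl C A B : subf C A -> subf C (Imp A B)
| sf_impr C A B : subf C B -> subf C (Imp A B)
| sf_all C x A : subf C A -> subf C (All x A).

(** [Vof E x v] : v belongs to V(x), the set of variables bound in the subformula
    [forall x, A] of E at the position labelled [forall x]. *)
Definition Vof (E : form) (x : nat) (v : nat) : Prop :=
  exists A, subf (All x A) E /\ In v (bv (All x A)).

(** y is in the scope of x in E: the position labelled [forall x] is a strict
    prefix of the position labelled [forall y]. *)
Definition in_scope (E : form) (x y : nat) : Prop :=
  exists A, subf (All x A) E /\ In y (bv A).

(** An item is a formula or a bracket [Γ]_V; V is a finite set of variables
    represented by a list (read as a set), Γ a multiset represented by a list
    (read up to permutation, see [ctx_eq]). *)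
Inductive item : Type :=
| IF (A : form)
| IB (V : list nat) (G : list item).

Definition ctx := list item.

Fixpoint fv_item (i : item) : list nat :=
  match i with
  | IF A => fv_form A
  | IB V G => filter (fun v => negb (existsb (Nat.eqb v) V))
               ((fix go (l : list item) : list nat :=
                   match l with [] => [] | j :: l' => fv_item j ++ go l' end) G)
  end.

Inductive item_eq : item -> item -> Prop :=
| ie_form A : item_eq (IF A) (IF A)
| ie_br V V' G G' : (forall v, In v V <-> In v V') -> ctx_eq G G' ->
    item_eq (IB V G) (IB V' G')
with ctx_eq : ctx -> ctx -> Prop :=
| ce_nil : ctx_eq [] []
| ce_skip i i' G G' : item_eq i i' -> ctx_eq G G' -> ctx_eq (i :: G) (i' :: G')
| ce_swap i j G : ctx_eq (i :: j :: G) (j :: i :: G)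
| ce_trans G1 G2 G3 : ctx_eq G1 G2 -> ctx_eq G2 G3 -> ctx_eq G1 G3.

Inductive clean_step : ctx -> ctx -> Prop :=
| cs_extract G1 G2 V I G :
    (forall v, In v (fv_item I) -> ~ In v V) ->
    clean_step (G1 ++ IB V (I :: G) :: G2) (G1 ++ I :: IB V G :: G2)
| cs_empty G1 G2 V : clean_step (G1 ++ IB V [] :: G2) (G1 ++ G2)
| cs_contr G1 G2 I : clean_step (G1 ++ I :: I :: G2) (G1 ++ I :: G2)
| cs_cong G1 G2 V G G' : clean_step G G' ->
    clean_step (G1 ++ IB V G :: G2) (G1 ++ IB V G' :: G2).

Definition clean_star : ctx -> ctx -> Prop :=
  clos_refl_trans ctx (fun a b => clean_step a b \/ ctx_eq a b).

Definition ctx_normal (G : ctx) : Prop :=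
  forall G0 G', ctx_eq G G0 -> ~ clean_step G0 G'.

Definition item_normal (i : item) : Prop := ctx_normal [i].

(** A normalisation strategy: [nf G] is a normal form of G ( = G↓ ). *)
Definition nf_spec (nf : ctx -> ctx) : Prop :=
  forall G, clean_star G (nf G) /\ ctx_normal (nf G).

Inductive item_occ (i : item) : ctx -> Prop :=
| io_here G : In i G -> item_occ i G
| io_deep V G' G : In (IB V G') G -> item_occ i G' -> item_occ i G.

Definition form_occ (A : form) (G : ctx) : Prop := item_occ (IF A) G.

Definition form_ok (A : form) : Prop :=
  NoDup (bv A) /\ forall v, In v (bv A) -> ~ In v (fv_form A).

Definition wf_seq (G : ctx) (C : form) : Prop :=
  ctx_normal G /\ form_ok C /\ forall A, form_occ A G -> form_ok A.

Fixpoint imps (As : list form) (P : form) : form :=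
  match As with [] => P | A :: As' => Imp A (imps As' P) end.

(** frames [(Γ1,V1); ...; (Γ_{i-1},V_{i-1})]:
    nest fs D = Γ1,[Γ2,[ ... Γ_{i-1},[D]_{V_{i-1}} ... ]_{V2}]_{V1} *)
Fixpoint nest (fs : list (ctx * list nat)) (D : ctx) : ctx :=
  match fs with
  | [] => D
  | (G, V) :: fs' => G ++ [IB V (nest fs' D)]
  end.

(** unnest [] fs = [ ... [[Γ1]_{V1}, Γ2]_{V2}, ..., Γ_{i-1}]_{V_{i-1}} (empty if i = 1) *)
Fixpoint unnest (acc : ctx) (fs : list (ctx * list nat)) : ctx :=
  match fs with
  | [] => acc
  | (G, V) :: fs' => unnest [IB V (acc ++ G)] fs'
  end.

Inductive tree : Type := Node (G : ctx) (C : form) (kids : list tree).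

Definition root (t : tree) : ctx * form := let 'Node G C _ := t in (G, C).

Inductive rule_inst (nf : ctx -> ctx) : ctx -> form -> list (ctx * form) -> Prop :=
| r_imp G A B :
    rule_inst nf G (Imp A B) [(nf (G ++ [IF A]), B)]
| r_all G x A :
    rule_inst nf G (All x A) [(nf [IB (bv (All x A)) G], A)]
| r_limp G fs Gi As p ts :
    ctx_eq G (nest fs (Gi ++ [IF (imps As (Atom p ts))])) ->
    (forall v, In v (fv_terms ts) -> forall Gk Vk, In (Gk, Vk) fs -> ~ In v Vk) ->
    rule_inst nf G (Atom p ts)
      (map (fun A => (nf (unnest [] fs ++ Gi ++ [IF (imps As (Atom p ts))]), A)) As).

Inductive valid (nf : ctx -> ctx) : tree -> Prop :=
| v_node G C ks :
    wf_seq G C ->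
    rule_inst nf G C (map root ks) ->
    (forall k, In k ks -> valid nf k) ->
    valid nf (Node G C ks).

Inductive node_in (G : ctx) (C : form) : tree -> Prop :=
| ni_here ks : node_in G C (Node G C ks)
| ni_kid G0 C0 ks k : In k ks -> node_in G C k -> node_in G C (Node G0 C0 ks).

(* Main.v *)
Require Import Defs.
From Stdlib Require Import List Arith Relations Classical.
Import ListNotations.

Lemma subf_trans : forall A B C, subf A B -> subf B C -> subf A C.
Proof. intros A B C H1 H2; induction H2; eauto using subf. Qed.

Lemma subf_bv : forall A B, subf A B -> forall v, In v (bv A) -> In v (bv B).
Proof.
  intros A B H; induction H; simpl; intros v Hv; auto.
  - apply in_app_iff; left; auto.
  - apply in_app_iff; right; auto.
Qed.

Lemma subf_fv : forall X Y, subf X Y -> forall v, In v (fv_form X) -> In v (fv_form Y) \/ In v (bv Y).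
Proof.
  intros X Y H; induction H; intros v Hv; simpl; auto.
  - destruct (IHsubf v Hv); [left|right]; apply in_app_iff; auto.
  - destruct (IHsubf v Hv); [left|right]; apply in_app_iff; auto.
  - destruct (IHsubf v Hv).
    + destruct (Nat.eq_dec v x).
      * right; left; auto.
      * left; apply filter_In; split; auto; apply Bool.negb_true_iff, Nat.eqb_neq; auto.
    + right; right; auto.
Qed.

Lemma bv_binder : forall Y v, In v (bv Y) -> exists B, subf (All v B) Y.
Proof.
  induction Y; simpl; intros v Hv.
  - contradiction.
  - apply in_app_iff in Hv; destruct Hv as [H|H];
    [destruct (IHY1 v H) as [B HB]|destruct (IHY2 v H) as [B HB]]; exists B;
    [apply sf_impl|apply sf_impr]; auto.
  - destruct Hv as [<-|H].
    + exists Y; constructor.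
    + destruct (IHY v H) as [B HB]; exists B; constructor; auto.
Qed.

Lemma nodup_app_disj : forall (l1 l2 : list nat) a, NoDup (l1 ++ l2) -> In a l1 -> In a l2 -> False.
Proof.
  intros l1 l2 a H H1 H2. apply in_split in H2. destruct H2 as [m1 [m2 ->]].
  rewrite app_assoc in H. apply NoDup_remove_2 in H. apply H, in_app_iff; left; apply in_app_iff; left; auto.
Qed.

Lemma binder_unique : forall E z A1 A2, NoDup (bv E) -> subf (All z A1) E -> subf (All z A2) E -> A1 = A2.
Proof.
  induction E; intros z A1 A2 Hnd H1 H2; simpl in Hnd.
  - inversion H1.
  - pose proof (NoDup_app_remove_r _ _ Hnd) as N1.
    pose proof (NoDup_app_remove_l _ _ Hnd) as N2.
    inversion H1; subst; inversion H2; subst.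
    + eapply IHE1; eauto.
    + exfalso; apply (nodup_app_disj _ _ z Hnd); eapply subf_bv; eauto; simpl; auto.
    + exfalso; apply (nodup_app_disj _ _ z Hnd); eapply subf_bv; eauto; simpl; auto.
    + eapply IHE2; eauto.
  - inversion Hnd as [|? ? Hn Hd]; subst.
    inversion H1; subst; inversion H2; subst; auto.
    + exfalso; apply Hn; eapply subf_bv; eauto; simpl; auto.
    + exfalso; apply Hn; eapply subf_bv; eauto; simpl; auto.
    + eapply IHE; eauto.
Qed.

Lemma binder_tree : forall E v w B1 B2 c, NoDup (bv E) -> subf (All v B1) E -> subf (All w B2) E ->
  In c (bv B1) -> In c (bv B2) -> v = w \/ In v (bv B2) \/ In w (bv B1).
Proof.
  induction E; intros v w B1 B2 c Hnd H1 H2 Hc1 Hc2; simpl in Hnd.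
  - inversion H1.
  - pose proof (NoDup_app_remove_r _ _ Hnd) as N1.
    pose proof (NoDup_app_remove_l _ _ Hnd) as N2.
    inversion H1; subst; inversion H2; subst.
    + eapply IHE1; eauto.
    + exfalso; apply (nodup_app_disj _ _ c Hnd); eapply subf_bv; eauto; simpl; auto.
    + exfalso; apply (nodup_app_disj _ _ c Hnd); eapply subf_bv; eauto; simpl; auto.
    + eapply IHE2; eauto.
  - inversion Hnd as [|? ? Hn Hd]; subst.
    inversion H1; subst; inversion H2; subst; auto.
    + right; right. eapply subf_bv; eauto; simpl; auto.
    + right; left. eapply subf_bv; eauto; simpl; auto.
    + eapply IHE; eauto.
Qed.

Lemma anc : forall E Z v B, NoDup (bv E) -> subf Z E -> In v (fv_form Z) -> ~ In v (fv_form E) ->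
  subf (All v B) E -> subf Z B.
Proof.
  induction E; intros Z v B Hnd HZ Hv Hnf HB; simpl in Hnd.
  - inversion HB.
  - pose proof (NoDup_app_remove_r _ _ Hnd) as N1.
    pose proof (NoDup_app_remove_l _ _ Hnd) as N2.
    simpl in Hnf.
    inversion HZ; subst; [exfalso; apply Hnf; exact Hv| |];
    (inversion HB; subst; [ | ]).
    + eapply IHE1; eauto. intro; apply Hnf, in_app_iff; auto.
    + exfalso. destruct (subf_fv _ _ H1 v Hv).
      * apply Hnf, in_app_iff; auto.
      * apply (nodup_app_disj _ _ v Hnd); auto. eapply subf_bv; eauto; simpl; auto.
    + exfalso. destruct (subf_fv _ _ H1 v Hv).
      * apply Hnf, in_app_iff; auto.
      * apply (nodup_app_disj _ _ v Hnd); auto. eapply subf_bv; eauto; simpl; auto.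
    + eapply IHE2; eauto. intro; apply Hnf, in_app_iff; auto.
  - inversion Hnd as [|? ? Hn Hd]; subst.
    inversion HZ; subst; [exfalso; apply Hnf; exact Hv|].
    inversion HB; subst; auto.
    assert (Hvb : In v (bv E)) by (eapply subf_bv; eauto; simpl; auto).
    eapply IHE; eauto.
    intro Hf. destruct (Nat.eq_dec v x) as [->|Hne].
    + apply Hn; auto.
    + apply Hnf; simpl; apply filter_In; split; auto; apply Bool.negb_true_iff, Nat.eqb_neq; auto.
Qed.

Definition comparable E a b := a = b \/ in_scope E a b \/ in_scope E b a.
Definition lab E (W : list nat) y := forall v, In v W <-> (v = y \/ in_scope E y v).
Definition chain E (S : list nat) := forall a b, In a S -> In b S -> comparable E a b.
Definition Cond E (W : list nat) y (S : list nat) :=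
  (forall v, In v S -> ~ In v W) \/ (forall v, In v S -> ~ In v W -> in_scope E v y).

Lemma scope_trans E a b c : NoDup (bv E) -> in_scope E a b -> in_scope E b c -> in_scope E a c.
Proof.
  intros Hnd [A [HA Hb]] [B [HB Hc]].
  destruct (bv_binder A b Hb) as [B' HB'].
  assert (B' = B) as ->.
  { eapply binder_unique; eauto. eapply subf_trans; [exact HB'|].
    eapply subf_trans; [|exact HA]. apply sf_all, sf_refl. }
  exists A; split; auto. eapply subf_bv; eauto. simpl; auto.
Qed.

Lemma anc_comp E a b c : NoDup (bv E) -> in_scope E a c -> in_scope E b c -> comparable E a b.
Proof.
  intros Hnd [A [HA Ha]] [B [HB Hb]].
  destruct (binder_tree E a b A B c Hnd HA HB Ha Hb) as [->|[H|H]].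
  - left; auto.
  - right; right; exists B; auto.
  - right; left; exists A; auto.
Qed.

Lemma free_binder E Z v : NoDup (bv E) -> closed E -> subf Z E -> In v (fv_form Z) ->
  exists B, subf (All v B) E /\ subf Z B.
Proof.
  intros Hnd Hcl HZ Hv. destruct (subf_fv _ _ HZ v Hv) as [Hf|Hb].
  - unfold closed in Hcl; rewrite Hcl in Hf; contradiction.
  - destruct (bv_binder _ _ Hb) as [B HB]. exists B; split; auto.
    eapply anc; eauto. unfold closed in Hcl; rewrite Hcl; auto.
Qed.

Lemma fv_chain E F : NoDup (bv E) -> closed E -> subf F E -> chain E (fv_form F).
Proof.
  intros Hnd Hcl HF v w Hv Hw.
  destruct (free_binder E F v Hnd Hcl HF Hv) as [B1 [HB1 HF1]].
  destruct (free_binder E F w Hnd Hcl HF Hw) as [B2 [HB2 HF2]].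
  destruct (subf_fv _ _ HF2 v Hv) as [Hv2|Hv2].
  - destruct (Nat.eq_dec v w) as [->|Hne]; [left; auto|].
    assert (Hva : In v (fv_form (All w B2))).
    { simpl; apply filter_In; split; auto; apply Bool.negb_true_iff, Nat.eqb_neq; auto. }
    assert (Hs : subf (All w B2) B1).
    { eapply anc; eauto. unfold closed in Hcl; rewrite Hcl; auto. }
    right; left. exists B1; split; auto. eapply subf_bv; eauto. simpl; auto.
  - right; right. exists B2; auto.
Qed.

Lemma keyK E S W y : NoDup (bv E) -> chain E S -> lab E W y -> Cond E W y S.
Proof.
  intros Hnd Hch Hl.
  destruct (classic (exists w, In w S /\ In w W)) as [[w [HwS HwW]]|Hno].
  - right. intros v HvS HvW.
    apply Hl in HwW. assert (Hv' : ~ (v = y \/ in_scope E y v)) by (intro Hc; apply HvW, Hl, Hc).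
    destruct (Hch v w HvS HwS) as [->|[Hvw|Hwv]].
    + exfalso; auto.
    + destruct HwW as [->|Hyw]; auto.
      destruct (anc_comp E v y w Hnd Hvw Hyw) as [->|[H|H]]; auto; exfalso; auto.
    + exfalso. destruct HwW as [->|Hyw]; auto.
      apply Hv'; right; eapply scope_trans; eauto.
  - left. intros v HvS HvW; apply Hno; eauto.
Qed.

Lemma Cond_mono E W y S S' : incl S' S -> Cond E W y S -> Cond E W y S'.
Proof. intros Hi [H|H]; [left|right]; intros; apply H; auto. Qed.

Lemma Cond_lab E W W' y S : (forall v, In v W <-> In v W') -> Cond E W y S -> Cond E W' y S.
Proof. intros Hw [H|H]; [left|right]; intros v Hv Hn; [apply (H v Hv)|apply H]; auto; rewrite Hw; auto. Qed.

Lemma lab_eq E W W' y : (forall v, In v W <-> In v W') -> lab E W y -> lab E W' y.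
Proof. intros Hw Hl v; rewrite <- Hw; apply Hl. Qed.

Lemma fv_IB V G : fv_item (IB V G) = filter (fun v => negb (existsb (Nat.eqb v) V)) (flat_map fv_item G).
Proof. simpl. f_equal. all: try (induction G; simpl; congruence). Qed.

Lemma in_fv_IB v V G : In v (fv_item (IB V G)) <-> (exists J, In J G /\ In v (fv_item J)) /\ ~ In v V.
Proof.
  rewrite fv_IB, filter_In, in_flat_map. split.
  - intros [H1 H2]; split; auto. intro Hv. apply Bool.negb_true_iff in H2.
    assert (existsb (Nat.eqb v) V = true) by (apply existsb_exists; exists v; split; auto; apply Nat.eqb_refl).
    congruence.
  - intros [H1 H2]; split; auto. apply Bool.negb_true_iff.
    destruct (existsb (Nat.eqb v) V) eqn:He; auto.
    apply existsb_exists in He. destruct He as [u [Hu Heq]]. apply Nat.eqb_eq in Heq; subst; contradiction.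
Qed.

Inductive Inv (E : form) : item -> Prop :=
| Inv_f A : subf A E -> Inv E (IF A)
| Inv_b W G y : lab E W y -> (forall J, In J G -> Inv E J /\ Cond E W y (fv_item J)) -> Inv E (IB W G).

Definition N2 E (G : ctx) := forall J, In J G -> Inv E J.
Definition fvsub (G G' : ctx) := forall J', In J' G' -> exists J, In J G /\ incl (fv_item J') (fv_item J).

Lemma clean_step_inv E G G' : clean_step G G' -> N2 E G -> N2 E G' /\ fvsub G G'.
Proof.
  induction 1 as [G1 G2 V I G Hd|G1 G2 V|G1 G2 I|G1 G2 V G G' Hs IH]; intros HN.
  - assert (HB : Inv E (IB V (I :: G))) by (apply HN; apply in_app_iff; right; left; auto).
    inversion HB as [|W0 G0 y Hl Hit]; subst.
    split.
    + intros J HJ. apply in_app_iff in HJ. destruct HJ as [HJ|[<-|[<-|HJ]]].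
      * apply HN, in_app_iff; auto.
      * apply Hit; left; auto.
      * apply Inv_b with y; auto. intros K HK; apply Hit; right; auto.
      * apply HN, in_app_iff; right; right; auto.
    + intros J HJ. apply in_app_iff in HJ. destruct HJ as [HJ|[<-|[<-|HJ]]].
      * exists J; split; [apply in_app_iff; auto | apply incl_refl].
      * exists (IB V (I :: G)); split; [apply in_app_iff; right; left; auto|].
        intros v Hv. apply in_fv_IB. split; [exists I; split; [left|]; auto | apply Hd; auto].
      * exists (IB V (I :: G)); split; [apply in_app_iff; right; left; auto|].
        intros v Hv. apply in_fv_IB in Hv. destruct Hv as [[K [HK Hv]] Hn]. apply in_fv_IB.
        split; auto. exists K; split; auto; right; auto.
      * exists J; split; [apply in_app_iff; right; right; auto| apply incl_refl].
  - split.
    + intros J HJ; apply in_app_iff in HJ; apply HN; apply in_app_iff; destruct HJ; [left|right; right]; auto.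
    + intros J HJ; exists J; split; [|apply incl_refl]. apply in_app_iff in HJ; apply in_app_iff;
      destruct HJ; [left|right; right]; auto.
  - split.
    + intros J HJ; apply in_app_iff in HJ; apply HN; apply in_app_iff; destruct HJ as [H|[H|H]]; [left|right; left|right; right; right]; auto.
    + intros J HJ; exists J; split; [|apply incl_refl]. apply in_app_iff in HJ; apply in_app_iff;
      destruct HJ as [H|[H|H]]; [left|right; left|right; right; right]; auto.
  - assert (HB : Inv E (IB V G)) by (apply HN; apply in_app_iff; right; left; auto).
    inversion HB as [|W0 G0 y Hl Hit]; subst.
    assert (HNG : N2 E G) by (intros J HJ; apply Hit; auto).
    destruct (IH HNG) as [HN' Hsub].
    split.
    + intros J HJ. apply in_app_iff in HJ. destruct HJ as [HJ|[<-|HJ]].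
      * apply HN, in_app_iff; auto.
      * apply Inv_b with y; auto. intros K HK. split; auto.
        destruct (Hsub K HK) as [K0 [HK0 Hinc]]. eapply Cond_mono; eauto. apply Hit; auto.
      * apply HN, in_app_iff; right; right; auto.
    + intros J HJ. apply in_app_iff in HJ. destruct HJ as [HJ|[<-|HJ]].
      * exists J; split; [apply in_app_iff; auto | apply incl_refl].
      * exists (IB V G); split; [apply in_app_iff; right; left; auto|].
        intros v Hv. apply in_fv_IB in Hv. destruct Hv as [[K [HK Hv]] Hn].
        destruct (Hsub K HK) as [K0 [HK0 Hinc]]. apply in_fv_IB. split; auto. exists K0; auto.
      * exists J; split; [apply in_app_iff; right; right; auto| apply incl_refl].
Qed.

Scheme item_eq_ind2 := Minimality for item_eq Sort Prop
with ctx_eq_ind2 := Minimality for ctx_eq Sort Prop.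

Lemma eq_inv E :
  (forall i i', item_eq i i' -> Inv E i -> Inv E i' /\ incl (fv_item i') (fv_item i)) /\
  (forall G G', ctx_eq G G' -> N2 E G -> N2 E G' /\ fvsub G G').
Proof.
  set (P := fun i i' => Inv E i -> Inv E i' /\ incl (fv_item i') (fv_item i)).
  set (Q := fun G G' => N2 E G -> N2 E G' /\ fvsub G G').
  assert (c1 : forall A, P (IF A) (IF A)) by (intros A H; split; auto; apply incl_refl).
  assert (c2 : forall V V' G G', (forall v, In v V <-> In v V') -> ctx_eq G G' -> Q G G' -> P (IB V G) (IB V' G')).
  { intros V V' G G' Hv _ IH HB. inversion HB as [|W0 G0 y Hl Hit]; subst.
    assert (HNG : N2 E G) by (intros J HJ; apply Hit; auto).
    destruct (IH HNG) as [HN' Hsub]. split.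
    - apply Inv_b with y. + eapply lab_eq; eauto.
      + intros K HK. split; auto. destruct (Hsub K HK) as [K0 [HK0 Hinc]].
        eapply Cond_lab; eauto. eapply Cond_mono; eauto. apply Hit; auto.
    - intros v Hw. apply in_fv_IB in Hw. destruct Hw as [[K [HK Hw]] Hn].
      destruct (Hsub K HK) as [K0 [HK0 Hinc]]. apply in_fv_IB. split; [exists K0; auto|].
      rewrite Hv; auto. }
  assert (c3 : Q [] []) by (intros H; split; [intros J []|intros J []]).
  assert (c4 : forall i i' G G', item_eq i i' -> P i i' -> ctx_eq G G' -> Q G G' -> Q (i :: G) (i' :: G')).
  { intros i i' G G' _ IH1 _ IH2 HN.
    destruct (IH1 (HN i (or_introl eq_refl))) as [Hi Hinc].
    destruct (IH2 (fun J HJ => HN J (or_intror HJ))) as [HG Hs]. split.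
    - intros J [<-|HJ]; auto.
    - intros J [<-|HJ]. + exists i; split; [left|]; auto.
      + destruct (Hs J HJ) as [K [HK Hk]]; exists K; split; [right|]; auto. }
  assert (c5 : forall i j G, Q (i :: j :: G) (j :: i :: G)).
  { intros i j G HN; split.
    - intros J HJ; apply HN; simpl in *; tauto.
    - intros J HJ; exists J; split; [simpl in *; tauto|apply incl_refl]. }
  assert (c6 : forall G1 G2 G3, ctx_eq G1 G2 -> Q G1 G2 -> ctx_eq G2 G3 -> Q G2 G3 -> Q G1 G3).
  { intros G1 G2 G3 _ IH1 _ IH2 HN. destruct (IH1 HN) as [H2 S2]. destruct (IH2 H2) as [H3 S3].
    split; auto. intros J HJ. destruct (S3 J HJ) as [K [HK Hk]]. destruct (S2 K HK) as [L [HL Hl]].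
    exists L; split; auto. eapply incl_tran; eauto. }
  split.
  - exact (item_eq_ind2 P Q c1 c2 c3 c4 c5 c6).
  - exact (ctx_eq_ind2 P Q c1 c2 c3 c4 c5 c6).
Qed.

Lemma star_inv E G G' : clean_star G G' -> N2 E G -> N2 E G'.
Proof.
  induction 1 as [x y [Hs|He]| |]; intros HN; auto.
  - apply (clean_step_inv E x y Hs HN).
  - apply (proj2 (eq_inv E) x y He HN).
Qed.

Fixpoint item_eq_refl (i : item) : item_eq i i :=
  match i with
  | IF A => ie_form A
  | IB V G => ie_br V V G G (fun v => iff_refl (In v V))
      ((fix go (l : list item) : ctx_eq l l :=
          match l with [] => ce_nil | j :: l' => ce_skip j j l' l' (item_eq_refl j) (go l') end) G)
  end.

Lemma ctx_eq_refl G : ctx_eq G G.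
Proof. induction G; constructor; auto using item_eq_refl. Qed.

Lemma ctx_eq_app_l l a b : ctx_eq a b -> ctx_eq (l ++ a) (l ++ b).
Proof. induction l; simpl; auto; intros; apply ce_skip; auto; apply item_eq_refl. Qed.

Lemma ctx_eq_move l1 i l2 : ctx_eq (l1 ++ i :: l2) (i :: l1 ++ l2).
Proof.
  induction l1; simpl. - apply ctx_eq_refl.
  - eapply ce_trans. + apply ce_skip. * apply item_eq_refl. * apply IHl1. + apply ce_swap.
Qed.

Lemma normal_hit N W D K : ctx_normal N -> In (IB W D) N -> In K D -> exists v, In v (fv_item K) /\ In v W.
Proof.
  intros Hn HB HK. apply NNPP; intro Hno.
  apply in_split in HB as [l1 [l2 ->]]. apply in_split in HK as [m1 [m2 ->]].
  apply (Hn (l1 ++ IB W (K :: m1 ++ m2) :: l2) (l1 ++ K :: IB W (m1 ++ m2) :: l2)).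
  - apply ctx_eq_app_l. apply ce_skip; [|apply ctx_eq_refl]. apply ie_br; [intro; tauto| apply ctx_eq_move].
  - apply cs_extract. intros v Hv Hw; apply Hno; eauto.
Qed.

Lemma normal_sub N W D : ctx_normal N -> In (IB W D) N -> ctx_normal D.
Proof.
  intros Hn HB D0 D' He Hs. apply in_split in HB as [l1 [l2 ->]].
  apply (Hn (l1 ++ IB W D0 :: l2) (l1 ++ IB W D' :: l2)).
  - apply ctx_eq_app_l, ce_skip; [apply ie_br; [intro; tauto|auto]|apply ctx_eq_refl].
  - apply cs_cong; auto.
Qed.

Lemma normal_eq G N : ctx_eq G N -> ctx_normal G -> ctx_normal N.
Proof. intros He Hn G0 G' He2; apply Hn; eapply ce_trans; eauto. Qed.

Lemma bracket_above E N W D y : ctx_normal N -> In (IB W D) N ->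
  (forall J, In J D -> Cond E W y (fv_item J)) -> forall v, In v (fv_item (IB W D)) -> in_scope E v y.
Proof.
  intros Hn HB Hc v Hv. apply in_fv_IB in Hv as [[K [HK Hv]] Hnv].
  destruct (Hc K HK) as [Hl|Hr]; [|apply Hr; auto].
  exfalso. destruct (normal_hit N W D K Hn HB HK) as [u [Hu1 Hu2]]. apply (Hl u); auto.
Qed.

Lemma item_chain E N J : NoDup (bv E) -> closed E -> ctx_normal N -> In J N -> Inv E J -> chain E (fv_item J).
Proof.
  intros Hnd Hcl Hn HJ HI. inversion HI as [A HA|W D y Hl Hit]; subst.
  - simpl; apply fv_chain; auto.
  - intros a b Ha Hb. apply (anc_comp E a b y); auto; eapply bracket_above; eauto;
    intros; apply Hit; auto.
Qed.

Lemma labels_sub E fs D : NoDup (bv E) -> forall N V1, ctx_normal N -> N2 E N -> In (IB V1 (nest fs D)) N ->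
  forall Gk Vk, In (Gk, Vk) fs -> forall u, In u Vk -> In u V1.
Proof.
  intros Hnd. induction fs as [|[G2 V2] fs' IH]; intros N V1 Hn HN HB Gk Vk Hk u Hu; [contradiction|].
  simpl in HB.
  assert (HXn : ctx_normal (G2 ++ [IB V2 (nest fs' D)])) by (eapply normal_sub; eauto).
  assert (HI1 : Inv E (IB V1 (G2 ++ [IB V2 (nest fs' D)]))) by auto.
  inversion HI1 as [|W0 G0 y1 Hl1 Hit1]; subst.
  assert (HB2 : In (IB V2 (nest fs' D)) (G2 ++ [IB V2 (nest fs' D)])) by (apply in_app_iff; right; left; auto).
  assert (HI2 : Inv E (IB V2 (nest fs' D))) by (apply Hit1; auto).
  inversion HI2 as [|W2 G2' y2 Hl2 Hit2]; subst.
  assert (Hsub : forall u, In u V2 -> In u V1).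
  { destruct (normal_hit N V1 _ _ Hn HB HB2) as [v [Hv1 Hv2]].
    assert (Hvy : in_scope E v y2).
    { eapply bracket_above; [exact HXn|exact HB2| |exact Hv1]. intros J HJ; apply Hit2; auto. }
    assert (Hy : in_scope E y1 y2).
    { apply Hl1 in Hv2. destruct Hv2 as [->|Hs]; auto. eapply scope_trans; eauto. }
    intros w Hw. apply Hl1. apply Hl2 in Hw. right. destruct Hw as [->|Hs]; auto.
    eapply scope_trans; eauto. }
  destruct Hk as [Heq|Hk].
  - injection Heq as -> ->. auto.
  - apply Hsub. eapply (IH _ V2); eauto. intros J HJ; apply Hit1; auto.
Qed.

Lemma unnest_inv E fs : NoDup (bv E) -> closed E -> forall acc D, ctx_normal (nest fs D) -> N2 E (nest fs D) ->
  N2 E acc ->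
  (forall v, In v (flat_map fv_item acc) -> forall Gk Vk, In (Gk,Vk) fs -> ~ In v Vk) -> N2 E (unnest acc fs).
Proof.
  intros Hnd Hcl. induction fs as [|[G1 V1] fs' IH]; intros acc D Hn HN Hacc Hfv; simpl; auto.
  simpl in Hn, HN.
  assert (HB : In (IB V1 (nest fs' D)) (G1 ++ [IB V1 (nest fs' D)])) by (apply in_app_iff; right; left; auto).
  assert (HI := HN _ HB). inversion HI as [|W0 G0 y1 Hl1 Hit1]; subst.
  apply IH with D.
  - eapply normal_sub; eauto.
  - intros J HJ; apply Hit1; auto.
  - intros J [<-|[]]. apply Inv_b with y1; auto. intros K HK. apply in_app_iff in HK. destruct HK as [HK|HK].
    + split; [apply Hacc; auto|]. left. intros v Hv. apply (Hfv v) with G1; [apply in_flat_map; eauto| left; auto].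
    + split; [apply HN, in_app_iff; auto|]. apply keyK; auto. eapply item_chain; eauto.
      * apply in_app_iff; left; eauto.
      * apply HN, in_app_iff; auto.
  - intros v Hv Gk Vk Hk Hvk. simpl in Hv. rewrite app_nil_r in Hv. apply in_fv_IB in Hv as [_ Hn1].
    apply Hn1. eapply labels_sub; eauto.
Qed.

Lemma nest_inner E fs D : N2 E (nest fs D) -> N2 E D.
Proof.
  induction fs as [|[G1 V1] fs' IH]; simpl; auto. intros HN. apply IH.
  assert (HI : Inv E (IB V1 (nest fs' D))) by (apply HN, in_app_iff; right; left; auto).
  inversion HI as [|W0 G0 y1 Hl1 Hit1]; subst. intros J HJ; apply Hit1; auto.
Qed.

Lemma occ_inv E i G : item_occ i G -> N2 E G -> Inv E i.
Proof.
  induction 1 as [G H|V G' G H Hocc IH]; intros HN; auto.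
  apply IH. assert (HI := HN _ H). inversion HI as [|W0 G0 y1 Hl1 Hit1]; subst.
  intros J HJ; apply Hit1; auto.
Qed.

Lemma imps_sub As P A : In A As -> subf A (imps As P).
Proof.
  induction As as [|B As IH]; simpl; [contradiction|]. intros [<-|H].
  - apply sf_impl, sf_refl.
  - apply sf_impr; auto.
Qed.

Lemma main_inv E nf : NoDup (bv E) -> closed E -> nf_spec nf -> forall t, valid nf t ->
  forall G C, root t = (G, C) -> subf C E -> N2 E G -> forall G0 C0, node_in G0 C0 t -> N2 E G0.
Proof.
  intros Hnd Hcl Hnf t Hv. induction Hv as [G C ks Hwf Hr Hks IH].
  intros G' C' Hroot HC HG G0 C0 Hni. simpl in Hroot; injection Hroot as <- <-.
  inversion Hni as [ks0 | G1 C1 ks1 k Hk Hnik]; subst; auto.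
  destruct k as [Gk Ck ksk].
  assert (Hin : In (Gk, Ck) (map root ks)).
  { change (Gk, Ck) with (root (Node Gk Ck ksk)); apply in_map; auto. }
  destruct Hwf as [Hnorm _].
  assert (Hkid : subf Ck E /\ N2 E Gk).
  { remember (map root ks) as L eqn:HL. clear HL.
    destruct Hr as [G A B|G x A|G fs Gi As p ts Heq Hside].
    - destruct Hin as [Hin|[]]. injection Hin as <- <-. split.
      + eapply subf_trans; [|exact HC]. apply sf_impr, sf_refl.
      + eapply star_inv; [apply (proj1 (Hnf _))|].
        intros J HJ. apply in_app_iff in HJ. destruct HJ as [HJ|[<-|[]]]; auto.
        constructor. eapply subf_trans; [|exact HC]. apply sf_impl, sf_refl.
    - destruct Hin as [Hin|[]]. injection Hin as <- <-. split.
      + eapply subf_trans; [|exact HC]. apply sf_all, sf_refl.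
      + eapply star_inv; [apply (proj1 (Hnf _))|].
        assert (Hlab : lab E (bv (All x A)) x).
        { intros v. simpl. split.
          - intros [<-|Hv]; [left; auto|right; exists A; auto].
          - intros [<-|[A' [HA' Hv]]]; [left; auto|right].
            assert (A' = A) as -> by (eapply binder_unique; eauto). auto. }
        intros J [<-|[]]. apply Inv_b with x; auto.
        intros K HK. split; auto. apply keyK; auto. eapply item_chain; eauto.
    - apply in_map_iff in Hin. destruct Hin as [A [HA HAs]]. injection HA as <- <-.
      assert (HN : N2 E (nest fs (Gi ++ [IF (imps As (Atom p ts))]))) by
        (apply (proj2 (eq_inv E) _ _ Heq HG)).
      assert (Hn : ctx_normal (nest fs (Gi ++ [IF (imps As (Atom p ts))]))) by (eapply normal_eq; eauto).
      assert (HD := nest_inner E _ _ HN).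
      assert (HH : Inv E (IF (imps As (Atom p ts)))) by (apply HD, in_app_iff; right; left; auto).
      inversion HH as [F HF|]; subst.
      split.
      + eapply subf_trans; [|exact HF]. apply imps_sub; auto.
      + eapply star_inv; [apply (proj1 (Hnf _))|].
        intros J HJ. apply in_app_iff in HJ. destruct HJ as [HJ|HJ]; auto.
        revert J HJ. eapply unnest_inv; eauto.
        all: try (intros K []); try (intros v []). }
  destruct Hkid as [HCk HGk].
  apply (IH _ Hk Gk Ck eq_refl HCk HGk G0 C0 Hnik).
Qed.

Theorem proposition12 :
  forall (nf : ctx -> ctx), nf_spec nf ->
  forall (E : form), closed E -> NoDup (bv E) ->
  forall (x : nat), In x (bv E) ->
  forall (t : tree), valid nf t -> root t = (nil, E) ->
  forall (G0 : ctx) (C : form) (V : list nat) (G : ctx),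
    node_in G0 C t -> item_occ (IB V G) G0 -> item_normal (IB V G) ->
    (forall v, In v V <-> Vof E x v) ->
  forall (V' : list nat) (G' : ctx) (x' : nat),
    In (IB V' G') G -> In x' (bv E) -> (forall v, In v V' <-> Vof E x' v) ->
    in_scope E x x'.
Proof.
  intros nf Hnf E Hcl Hnd x Hx t Hv Hroot G0 C V G Hni Hocc Hnorm HV V' G' x' HIn Hx' HV'.
  assert (HN0 : N2 E G0).
  { eapply main_inv; eauto. - apply sf_refl. - intros J []. }
  assert (HI : Inv E (IB V G)) by (eapply occ_inv; eauto).
  inversion HI as [|W0 G00 y Hl Hit]; subst.
  assert (HI' := proj1 (Hit _ HIn)). inversion HI' as [|W1 G1 y' Hl' Hit']; subst.
  destruct (normal_hit [IB V G] V G (IB V' G') Hnorm (or_introl eq_refl) HIn) as [v [Hv1 Hv2]].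
  assert (HGn : ctx_normal G) by (eapply normal_sub; [exact Hnorm| left; reflexivity]).
  assert (Hvy : in_scope E v y').
  { eapply bracket_above; [exact HGn|exact HIn| |exact Hv1]. intros J HJ; apply Hit'; auto. }
  apply HV in Hv2. destruct Hv2 as [A [HA Hvb]]. simpl in Hvb.
  assert (Hxy : in_scope E x y').
  { destruct Hvb as [<-|Hvb]; auto. eapply scope_trans; eauto. exists A; auto. }
  assert (Hx'V' : In x' V').
  { apply HV'. destruct (bv_binder E x' Hx') as [B HB]. exists B; split; auto. simpl; auto. }
  apply Hl' in Hx'V'. destruct Hx'V' as [->|Hs]; auto. eapply scope_trans; eauto.
Qed.
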